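(* Let $G=(V,E,w)$ be a connected weighted multigraph, let $S\subseteq V$, and let $\psi=\max_{v\in V}d(v,S)$. Then for every $x\in S$ and every $l\ge0$, \[ \mathrm{rad}_{C_S(l,x)}(x)\le \psi+2l, \] i.e. every vertex of $C_S(l,x)$ is within distance $\psi+2l$ of $x$ in the subgraph induced by $C_S(l,x)$.
   Context: Edge lengths are $d(e)=1/w(e)$; $d(u,S)$ is the shortest-path distance in $G$ from $u$ to $S$. $F(S)=\{(u\to v): (u,v)\in E,\ d(u,S)+d(u,v)=d(v,S)\}$ is the set of (directed) forward edges induced by $S$. The cone $C_S(l,x)$ is the set of vertices reachable from $x$ by a path in $G$ such that the sum of the lengths of traversed edges that are not traversed as forward edges of $F(S)$ is at most $l$. For $U\subseteq V$, $\mathrm{rad}_U(x)$ is the smallest $r$ such that every vertex of $U$ is within distance $r$ of $x$ in the induced subgraph $G(U)$. *)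

(* Defs.v *)
From HB Require Import structures.
From mathcomp Require Import all_boot all_order all_algebra.
From mathcomp Require Import boolp classical_sets reals.
Set Implicit Arguments. Unset Strict Implicit. Unset Printing Implicit Defensive.
Import Order.TTheory GRing.Theory Num.Theory.
Local Open Scope ring_scope.
Local Open Scope classical_set_scope.

Section Graph.
Variables (R : realType) (V E : finType) (src tgt : E -> V) (w : E -> R).

(* A step is an edge together with a traversal direction:
   (e, true) goes src e -> tgt e, (e, false) goes tgt e -> src e. *)
Definition step_tail (s : E * bool) : V := if s.2 then src s.1 else tgt s.1.
Definition step_head (s : E * bool) : V := if s.2 then tgt s.1 else src s.1.

Definition elen (e : E) : R := (w e)^-1.

Fixpoint walk (x : V) (p : seq (E * bool)) (y : V) : Prop :=
  match p with
  | [::] => x = y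
  | s :: p' => step_tail s = x /\ walk (step_head s) p' y
  end.

Definition wlen (p : seq (E * bool)) : R := \sum_(s <- p) elen s.1.

Definition dist (u v : V) : R :=
  inf [set wlen p | p in [set p | walk u p v]].

Definition distS (S : {set V}) (u : V) : R :=
  inf [set wlen p | p in [set p | exists2 v, v \in S & walk u p v]].

Definition psi (S : {set V}) : R := \big[Num.max/0]_(v : V) distS S v.

(* the step s is traversed as a forward edge of F(S), i.e. as
   (u -> v) with d(u,S) + d(e) = d(v,S) *)
Definition forward_step (S : {set V}) (s : E * bool) : Prop :=
  distS S (step_tail s) + elen s.1 = distS S (step_head s).

Definition nonforward_len (S : {set V}) (p : seq (E * bool)) : R :=
  \sum_(s <- p) (if `[< forward_step S s >] then 0 else elen s.1).

Definition cone (S : {set V}) (l : R) (x : V) : set V :=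
  [set v | exists p, walk x p v /\ nonforward_len S p <= l].

Fixpoint walk_in (U : set V) (x : V) (p : seq (E * bool)) (y : V) : Prop :=
  match p with
  | [::] => U x /\ x = y
  | s :: p' => U x /\ step_tail s = x /\ walk_in U (step_head s) p' y
  end.

Definition connected_graph : Prop := forall u v : V, exists p, walk u p v.

End Graph.

(* Main.v *)
Require Import Defs.
From mathcomp Require Import all_boot all_order all_algebra.
From mathcomp Require Import boolp classical_sets reals.
From mathcomp Require Import lra.
Import Order.TTheory GRing.Theory Num.Theory.
Local Open Scope ring_scope.

Section Aux.
Variables (R : realType) (V E : finType) (src tgt : E -> V) (w : E -> R).
Hypothesis w_pos : forall e, 0 < w e.

Lemma elen_gt0 e : 0 < elen w e.
Proof. by rewrite /elen invr_gt0. Qed.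

Lemma walk_cat x r a q y : walk src tgt x r a -> walk src tgt a q y ->
  walk src tgt x (r ++ q) y.
Proof.
elim: r x => [|s r IH] x /=; first by move=> ->.
by move=> [h1 h2] hq; split => //; apply: IH.
Qed.

Lemma nf_ge0 S p : 0 <= nonforward_len src tgt w S p.
Proof.
rewrite /nonforward_len; apply: sumr_ge0 => s _.
by case: ifP => // _; apply/ltW/elen_gt0.
Qed.

Lemma nf_cons S s p : nonforward_len src tgt w S (s :: p) =
  (if `[< forward_step src tgt w S s >] then 0 else elen w s.1)
  + nonforward_len src tgt w S p.
Proof. by rewrite /nonforward_len big_cons. Qed.

Lemma nf_cat S p q : nonforward_len src tgt w S (p ++ q) =
  nonforward_len src tgt w S p + nonforward_len src tgt w S q.
Proof. by rewrite /nonforward_len big_cat. Qed.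

Lemma wlen_cons s p : wlen w (s :: p) = elen w s.1 + wlen w p.
Proof. by rewrite /wlen big_cons. Qed.

Lemma wlen_ge0 p : 0 <= wlen w p.
Proof. by apply: sumr_ge0 => s _; apply/ltW/elen_gt0. Qed.

Local Open Scope classical_set_scope.
Definition dset (S : {set V}) (u : V) : set R := [set wlen w p | p in [set p : seq (E * bool) | exists2 v, v \in S & walk src tgt u p v]].

Lemma dset_lb (S : {set V}) u : has_lbound (dset S u).
Proof. by exists 0 => _ [p _ <-]; apply: wlen_ge0. Qed.

Lemma distS_ge0 (S : {set V}) u : (exists2 v, v \in S & exists p, walk src tgt u p v) ->
  0 <= distS src tgt w S u.
Proof.
move=> [v vS [p hp]]; apply: lb_le_inf.
  by exists (wlen w p); exists p => //; exists v.
by move=> _ [q _ <-]; apply: wlen_ge0.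
Qed.

Lemma distS_in (S : {set V}) u : u \in S -> distS src tgt w S u = 0.
Proof.
move=> uS; apply/eqP; rewrite eq_le; apply/andP; split.
  have := ge_inf (dset_lb S u); apply.
  by exists [::]; [exists u | rewrite /wlen big_nil].
by apply: distS_ge0; exists u => //; exists [::].
Qed.

Lemma distS_step (S : {set V}) (s : E * bool) : (exists2 v, v \in S & exists p, walk src tgt (step_head src tgt s) p v) ->
  distS src tgt w S (step_tail src tgt s) <= elen w s.1 + distS src tgt w S (step_head src tgt s).
Proof.
move=> [v vS [p hp]].
rewrite -lerBlDl; apply: lb_le_inf.
  by exists (wlen w p); exists p => //; exists v.
move=> _ [q [y yS hq] <-]; rewrite lerBlDl -wlen_cons.
have := ge_inf (dset_lb S (step_tail src tgt s)); apply.
by exists (s :: q) => //; exists y.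
Qed.

Definition rev_step (s : E * bool) := (s.1, ~~ s.2).

End Aux.

Theorem mainTheorem7 (R : realType) (V E : finType) (src tgt : E -> V)
  (w : E -> R) (w_pos : forall e, 0 < w e)
  (Gconn : connected_graph src tgt)
  (S : {set V}) (x : V) (xS : x \in S) (l : R) (l_ge0 : 0 <= l) :
  forall v, cone src tgt w S l x v ->
    exists p, walk_in src tgt (cone src tgt w S l x) x p v /\
              wlen w p <= psi src tgt w S + 2 * l.
Proof.
move=> v [p [hp hnf]].
have reachS : forall u, exists2 y, y \in S & exists q, walk src tgt u q y.
  by move=> u; exists x => //; apply: Gconn.
have key : forall q a b, walk src tgt a q b ->
  wlen w q + distS src tgt w S a <=
  distS src tgt w S b + 2 * nonforward_len src tgt w S q.
  elim=> [|s q IH] a b /=.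
    by move=> ->; rewrite /wlen /nonforward_len !big_nil add0r mulr0 addr0.
  move=> [ht hq]; have := IH _ _ hq.
  rewrite wlen_cons nf_cons mulrDr.
  case: asboolP => hf.
    rewrite /forward_step ht in hf.
    by rewrite mulr0 add0r -hf; lra.
  have := @distS_step R V E src tgt w w_pos S s (reachS _).
  rewrite ht; lra.
have Hv := key _ _ _ hp; rewrite (@distS_in R V E src tgt w w_pos S x xS) addr0 in Hv.
exists p; split; last first.
  apply: le_trans Hv _; apply: lerD.
    rewrite /psi; exact: (le_bigmax _ (fun u => distS src tgt w S u) v).
  by rewrite ler_pM2l.
have gen : forall q a r, walk src tgt x r a -> walk src tgt a q v ->
    nonforward_len src tgt w S r + nonforward_len src tgt w S q <= l ->
    walk_in src tgt (cone src tgt w S l x) a q v.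
  elim=> [|s q IH] a r hr /=.
    move=> <-; rewrite /nonforward_len big_nil addr0 => h; split => //.
    by rewrite /cone /=; exists r.
  move=> [ht hq] hl; split; [|split => //].
    rewrite /cone /=; exists r; split => //; apply: le_trans hl; rewrite lerDl; exact: nf_ge0.
  apply: (IH _ (r ++ [:: s])).
  - by apply: walk_cat hr _; rewrite /= -ht.
  - by [].
  - by rewrite nf_cat -addrA -nf_cat.
apply: (gen _ _ [::]) => //.
by rewrite /nonforward_len big_nil add0r.
Qed.
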